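(* Let $A$ and $B$ be quantum Latin squares of order $n$ with entries $\ket{A_{ij}},\ket{B_{ij}}$. If the linear map $$P:=\sum_{i=0}^{n-1}\sum_{j=0}^{n-1}\sum_{k=0}^{n-1}\langle k|B_{ij}\rangle\,(\ket i\otimes\ket j)(\bra{A_{ij}}\otimes\bra k)$$ on $\mathbb C^n\otimes\mathbb C^n$ is a permutation of basis states (maps $\{\ket p\otimes\ket q\}_{p,q}$ bijectively onto itself), then $A$ and $B$ are Latin squares.
   Context: $\{\ket k\}_{k=0}^{n-1}$ is the computational basis of $\mathbb C^n$. A quantum Latin square of order $n$ is an $n\times n$ array of vectors of $\mathbb C^n$ in which every row and every column is an orthonormal basis; the entry in column $i$, row $j$ is $\ket{A_{ij}}$. A Latin square is a quantum Latin square all of whose entries are computational basis states. *)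

(* Defs.v *)
From HB Require Import structures.
From mathcomp Require Import all_boot all_order all_algebra all_fingroup all_field.
Set Implicit Arguments. Unset Strict Implicit. Unset Printing Implicit Defensive.
Import Order.TTheory GRing.Theory Num.Theory.
Local Open Scope ring_scope.

Definition ket (n : nat) (k : 'I_n) : 'cV[algC]_n := delta_mx k 0.

Definition braket (n : nat) (u v : 'cV[algC]_n) : algC :=
  \sum_(k < n) (u k 0)^* * v k 0.

(* f : 'I_n -> C^n is an orthonormal basis of C^n
   (n orthonormal vectors in the n-dimensional space C^n) *)
Definition orthonormal_basis (n : nat) (f : 'I_n -> 'cV[algC]_n) : Prop :=
  forall a b : 'I_n, braket (f a) (f b) = (a == b)%:R.

(* A i j = |A_ij>, the entry in column i, row j. *)
Definition quantum_latin_square (n : nat) (A : 'I_n -> 'I_n -> 'cV[algC]_n) : Prop :=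
  (forall j, orthonormal_basis (fun i => A i j)) /\
  (forall i, orthonormal_basis (fun j => A i j)).

(* entries are computational basis states (up to a global phase) *)
Definition latin_square (n : nat) (A : 'I_n -> 'I_n -> 'cV[algC]_n) : Prop :=
  quantum_latin_square A /\
  forall i j, exists (k : 'I_n) (c : algC), `|c| = 1 /\ A i j = c *: ket k.

(* Matrix entry <a1|<a2| P |x1>|x2> of
   P = sum_{i,j,k} <k|B_ij> (|i> (x) |j>)(<A_ij| (x) <k|)
   on C^n (x) C^n, whose basis |p>(x)|q> is indexed by pairs (p,q). *)
Definition Pop (n : nat) (A B : 'I_n -> 'I_n -> 'cV[algC]_n)
    (a x : 'I_n * 'I_n) : algC :=
  \sum_(i < n) \sum_(j < n) \sum_(k < n)
    braket (ket k) (B i j) * ((ket i) a.1 0 * (ket j) a.2 0)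
    * (braket (A i j) (ket x.1) * braket (ket k) (ket x.2)).

Definition permutes_basis (n : nat) (P : 'I_n * 'I_n -> 'I_n * 'I_n -> algC) : Prop :=
  exists s : {perm 'I_n * 'I_n}, forall a x, P a x = (a == s x)%:R.

(* Main.v *)
Require Import Defs.
From mathcomp Require Import all_boot all_order all_algebra all_fingroup all_field.
Import Order.TTheory GRing.Theory Num.Theory.
Local Open Scope ring_scope.

Lemma ketE n (k l : 'I_n) (m : 'I_1) : ket k l m = (k == l)%:R.
Proof. by rewrite (ord1 m) /ket mxE eqxx andbT eq_sym. Qed.

Lemma braket_ketl n (k : 'I_n) v : braket (ket k) v = v k 0.
Proof.
rewrite /braket (bigD1 k) //= big1 ?addr0 => [|l /negbTE nl].
  by rewrite ketE eqxx conjC1 mul1r.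
by rewrite ketE eq_sym nl conjC0 mul0r.
Qed.

Lemma braket_ketr n (k : 'I_n) u : braket u (ket k) = (u k 0)^*.
Proof.
rewrite /braket (bigD1 k) //= big1 ?addr0 => [|l /negbTE nl].
  by rewrite ketE eqxx mulr1.
by rewrite ketE eq_sym nl mulr0.
Qed.

Lemma sum_only n (F : 'I_n -> algC) c :
  (forall i, i != c -> F i = 0) -> \sum_(i < n) F i = F c.
Proof. by move=> h; rewrite (bigD1 c) //= big1 ?addr0. Qed.

Lemma PopE n (A B : 'I_n -> 'I_n -> 'cV[algC]_n) a x :
  Pop A B a x = B a.1 a.2 x.2 0 * (A a.1 a.2 x.1 0)^*.
Proof.
rewrite /Pop (@sum_only _ _ a.1) => [|i /negbTE ni]; last first.
  by apply: big1 => j _; apply: big1 => k _; rewrite ketE ni mul0r mulr0 mul0r.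
rewrite (@sum_only _ _ a.2) => [|j /negbTE nj]; last first.
  by apply: big1 => k _; rewrite (ketE _ j) nj !mulr0 mul0r.
rewrite (@sum_only _ _ x.2) => [|k /negbTE nk]; last first.
  by rewrite eq_sym in nk; rewrite !braket_ketl !ketE nk !mulr0.
rewrite !braket_ketl braket_ketr !ketE !eqxx. by rewrite !mulr1.
Qed.

Lemma ket_form n (v : 'cV[algC]_n) (x : 'I_n) :
  (forall y, y != x -> v y 0 = 0) -> braket v v = 1 ->
  exists (k : 'I_n) (c : algC), `|c| = 1 /\ v = c *: ket k.
Proof.
move=> hz hn; exists x, (v x 0); split.
  move: hn; rewrite /braket (bigD1 x) //= big1 ?addr0 => [|l nl]; last first.
    by rewrite hz // mulr0.
  move=> h; apply/eqP; rewrite -sqrp_eq1 // normCK mulrC h //.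
apply/matrixP => l m; rewrite (ord1 m) !mxE eqxx andbT.
case: (eqVneq x l) => [<-|nl]; first by rewrite mulr1.
by rewrite mulr0 hz // eq_sym.
Qed.

Theorem lemma17 (n : nat) (A B : 'I_n -> 'I_n -> 'cV[algC]_n) :
  quantum_latin_square A -> quantum_latin_square B ->
  permutes_basis (Pop A B) ->
  latin_square A /\ latin_square B.
Proof.
move=> qA qB [s hs].
have key : forall i j, let x := s^-1%g (i, j) in
    B i j x.2 0 * (A i j x.1 0)^* = 1 /\
    (forall y, y != x -> B i j y.2 0 * (A i j y.1 0)^* = 0).
  move=> i j x; split.
    by have := hs (i, j) x; rewrite PopE /x permKV eqxx.
  move=> y ny; have := hs (i, j) y; rewrite PopE /= => ->.
  case: eqP => // e; case/negP: ny; by rewrite /x e permK.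
split; split => // i j; have [h1 h2] := key i j;
  set x := (s^-1 (i, j))%g in h1 h2.
- apply: (@ket_form _ _ x.1); last by case: qA => _ /(_ i) /(_ j j); rewrite eqxx.
  move=> y ny; have := h2 (y, x.2).
  have nb : B i j x.2 0 != 0.
    by apply/eqP => e; move: h1; rewrite e mul0r => /eqP; rewrite eq_sym oner_eq0.
  have nyx : (y, x.2) != x by apply: contra ny => /eqP <-.
  move=> /(_ nyx) /= /eqP; rewrite mulf_eq0 (negbTE nb) /= conjC_eq0.
  by move/eqP.
- apply: (@ket_form _ _ x.2); last by case: qB => _ /(_ i) /(_ j j); rewrite eqxx.
  move=> y ny; have := h2 (x.1, y).
  have nb : (A i j x.1 0)^* != 0.
    by apply/eqP => e; move: h1; rewrite e mulr0 => /eqP; rewrite eq_sym oner_eq0.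
  have nyx : (x.1, y) != x by apply: contra ny => /eqP <-.
  move=> /(_ nyx) /= /eqP; rewrite mulf_eq0 (negbTE nb) orbF.
  by move/eqP.
Qed.
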